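(* Let $U$ be a finite nonempty set, $(T,I,N)$ a residual triplet, $\widetilde{R}$ a $T$-preorder relation on $U$, $u,v\in U$ and $\lambda\in[0,1]$. (i) If the granules $\widetilde{R}^+_{1}(u)$ and $\widetilde{R}^-_{\lambda}(v)$ are $T$-disjoint, then $\widetilde{R}^-_{\lambda}(v)$ is adjacent to $\widetilde{R}^+_{1}(u)$. (ii) If the granules $\widetilde{R}^+_{\lambda}(u)$ and $\widetilde{R}^-_{1}(v)$ are $T$-disjoint, then $\widetilde{R}^+_{\lambda}(u)$ is adjacent to $\widetilde{R}^-_{1}(v)$. That is, every granule is adjacent to every granule with parameter $1$ from which it is $T$-disjoint.
   Context: A residual triplet $(T,I,N)$ consists of a left-continuous $t$-norm $T$, its residual implicator $I(x,y)=\sup\{\beta\in[0,1]: T(x,\beta)\le y\}$ and $N(x)=I(x,0)$. $\widetilde{R}:U\times U\to[0,1]$ is a $T$-preorder if reflexive and $T$-transitive. Granules: $\widetilde{R}^+_\lambda(u)$ is the fuzzy set $w\mapsto T(\widetilde{R}(w,u),\lambda)$ and $\widetilde{R}^-_\lambda(v)$ is $w\mapsto T(\widetilde{R}(v,w),\lambda)$. Fuzzy sets $B,C$ on $U$ are $T$-disjoint if $T(B(w),C(w))=0$ for all $w$. Adjacency: $\widetilde{R}^-_{\lambda_2}(v)$ is adjacent to $\widetilde{R}^+_{\lambda_1}(u)$ if $\lambda_1=I(\lambda_2,N(\widetilde{R}(v,u)))$; $\widetilde{R}^+_{\lambda_1}(u)$ is adjacent to $\widetilde{R}^-_{\lambda_2}(v)$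 if $\lambda_2=I(\lambda_1,N(\widetilde{R}(v,u)))$. *)

(* Defs.v *)
From Stdlib Require Import Reals List.
Open Scope R_scope.

Definition unit_int (x : R) : Prop := 0 <= x <= 1.

Definition is_tnorm (T : R -> R -> R) : Prop :=
  (forall x y, unit_int x -> unit_int y -> unit_int (T x y)) /\
  (forall x y, unit_int x -> unit_int y -> T x y = T y x) /\
  (forall x y z, unit_int x -> unit_int y -> unit_int z ->
      T x (T y z) = T (T x y) z) /\
  (forall x x' y, unit_int x -> unit_int x' -> unit_int y ->
      x <= x' -> T x y <= T x' y) /\
  (forall x, unit_int x -> T x 1 = x).

(* Left-continuity (in the first argument; by commutativity in both). *)
Definition left_continuous_tnorm (T : R -> R -> R) : Prop :=
  forall x y, 0 < x <= 1 -> unit_int y ->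
    forall eps, 0 < eps -> exists delta, 0 < delta /\
      forall z, unit_int z -> x - delta < z <= x -> Rabs (T x y - T z y) < eps.

Definition is_residual_implicator (T I : R -> R -> R) : Prop :=
  forall x y, unit_int x -> unit_int y ->
    is_lub (fun b => unit_int b /\ T x b <= y) (I x y).

Definition residual_triplet (T I : R -> R -> R) (N : R -> R) : Prop :=
  is_tnorm T /\ left_continuous_tnorm T /\ is_residual_implicator T I /\
  (forall x, N x = I x 0).

Definition fin_nonempty (U : Type) : Prop :=
  inhabited U /\ exists l : list U, forall u, In u l.

Definition T_preorder {U : Type} (T : R -> R -> R) (Rt : U -> U -> R) : Prop :=
  (forall u w, unit_int (Rt u w)) /\
  (forall u, Rt u u = 1) /\
  (forall u v w, T (Rt u v) (Rt v w) <= Rt u w).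

Definition granule_plus {U : Type} (T : R -> R -> R) (Rt : U -> U -> R)
  (lam : R) (u : U) : U -> R := fun w => T (Rt w u) lam.
Definition granule_minus {U : Type} (T : R -> R -> R) (Rt : U -> U -> R)
  (lam : R) (v : U) : U -> R := fun w => T (Rt v w) lam.

Definition T_disjoint {U : Type} (T : R -> R -> R) (B C : U -> R) : Prop :=
  forall w, T (B w) (C w) = 0.

Definition minus_adjacent_to_plus {U : Type} (I : R -> R -> R) (N : R -> R)
  (Rt : U -> U -> R) (l2 : R) (v : U) (l1 : R) (u : U) : Prop :=
  l1 = I l2 (N (Rt v u)).

Definition plus_adjacent_to_minus {U : Type} (I : R -> R -> R) (N : R -> R)
  (Rt : U -> U -> R) (l1 : R) (u : U) (l2 : R) (v : U) : Prop :=
  l2 = I l1 (N (Rt v u)).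

(* Main.v *)
Require Import Defs.
From Stdlib Require Import Reals Lra.
Open Scope R_scope.

Lemma key (T I : R -> R -> R) (N : R -> R) (r lam : R) :
  residual_triplet T I N -> unit_int r -> unit_int lam ->
  T r lam = 0 -> 1 = I lam (N r).
Proof.
  intros [[Hu [Hc [Ha [Hm H1]]]] [_ [Hres HN]]] Hr Hl H0.
  assert (Z : unit_int 0) by (unfold unit_int; lra).
  destruct (Hres r 0 Hr Z) as [ub lub].
  assert (Hn : lam <= I r 0) by (apply ub; split; [assumption| lra]).
  assert (Hn1 : I r 0 <= 1).
  { apply lub. intros b [[_ ?] _]; lra. }
  rewrite <- HN in Hn, Hn1.
  assert (UN : unit_int (N r)) by (unfold unit_int in *; lra).
  destruct (Hres lam (N r) Hl UN) as [ub2 lub2].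
  assert (A : 1 <= I lam (N r)).
  { apply ub2. split; [unfold unit_int; lra|]. rewrite H1 by assumption. lra. }
  assert (B : I lam (N r) <= 1).
  { apply lub2. intros b [[_ ?] _]; lra. }
  lra.
Qed.

Theorem proposition5 (U : Type) (T I : R -> R -> R) (N : R -> R)
  (Rt : U -> U -> R) (u v : U) (lam : R) :
  fin_nonempty U ->
  residual_triplet T I N ->
  T_preorder T Rt ->
  unit_int lam ->
  (T_disjoint T (granule_plus T Rt 1 u) (granule_minus T Rt lam v) ->
     minus_adjacent_to_plus I N Rt lam v 1 u) /\
  (T_disjoint T (granule_plus T Rt lam u) (granule_minus T Rt 1 v) ->
     plus_adjacent_to_minus I N Rt lam u 1 v).
Proof.
  intros _ HT [Hru [Hrefl _]] Hl.
  pose proof HT as HT'.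
  destruct HT' as [[Hu [Hc [Ha [Hm H1]]]] _].
  assert (O : unit_int 1) by (unfold unit_int; lra).
  assert (T11 : T 1 1 = 1) by (apply H1; exact O).
  split; intros D.
  - apply (key T I N); auto.
    specialize (D u). unfold granule_plus, granule_minus in D.
    rewrite Hrefl, T11 in D.
    rewrite (Hc 1 (T (Rt v u) lam)) in D; [| exact O | apply Hu; auto].
    rewrite H1 in D; [exact D | apply Hu; auto].
  - apply (key T I N); auto.
    specialize (D v). unfold granule_plus, granule_minus in D.
    rewrite Hrefl, T11 in D.
    rewrite H1 in D; [exact D | apply Hu; auto].
Qed.
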